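(* Let $D$ be a digraph with at least two vertices and $s\in V(D)$ such that every vertex of $D$ is reachable from $s$, let $(\hat T,\{B_x\}_{x\in V(\hat T)})$ be the $s$-rooted cut decomposition of $D$, and let $\hat P=x_1x_2\dots x_\ell$ be a degenerate path of $\hat T$. Then: (1) every out-branching of $D$ rooted at $s$ contains all arcs $x_ix_{i+1}$, $1\le i<\ell$ (in particular these are arcs of $D$); (2) every arc $x_jx_i$ of $D$ with $j>i$ belongs to no out-branching of $D$ rooted at $s$; (3) for every $1\le i<\ell$, the only arc of $D$ from $x_i$ to a vertex of $B_y$, where $y=x_i$ or $y$ is a descendant of $x_i$ in $\hat T$, is the arc $x_ix_{i+1}$.
   Context: Digraphs are finite and without loops; paths are directed. An out-tree is an oriented tree with exactly one vertex of in-degree zero (its root); an out-branching of $D$ is a spanning out-tree of $D$. A vertex $v$ is bi-reachable from $r$ if there are two internally vertex-disjoint directed paths from $r$ to $v$. For a digraph $H$ with at least two vertices and $r\in V(H)$ such that every vertex of $H$ is reachable from $r$, the diblock $B_r$ of $r$ in $H$ is the set of all vertices bi-reachable from $r$, together with $r$ and all out-neighbours of $r$. For $x\in B_r\setminus\{r\}$ let $X_x$ be the set of vertices $v\in V(H)\setminus B_r$ such that every directed $r$–$v$ path intersects $B_r$ for the last time in $x$; $x$ is a bottleneck of $B_r$ if $X_x\ne\emptyset$ (the sets $X_x$ partition $V(H)\setminus B_r$). The $r$-rooted cut decomposition $(\hat T,\{B_x\}_{x\in V(\hat T)})$ of $H$ is defined recursively: $\hat T$ is a rooted tree with root $r$ and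 $V(\hat T)\subseteq V(H)$; the set associated with the root is $B_r$; the children of $r$ are the bottlenecks of $B_r$; and for each bottleneck $x$, the subtree of $\hat T$ rooted at $x$ together with its associated sets is the $x$-rooted cut decomposition of the induced subgraph $H[X_x\cup\{x\}]$. A set $B_x$ is degenerate if $x$ is an internal (non-leaf) node of $\hat T$ and $|B_x|=2$. A path $x_1\dots x_\ell$ in $\hat T$ is monotone if it is a subpath of a path from the root of $\hat T$ to a leaf, with $x_{i+1}$ a child of $x_i$; it is degenerate if it is monotone and $B_{x_i}$ is degenerate for every $i$. *)

(* Defs.v *)
(* Digraph = finite type V with an (irreflexive) arc relation E.
   Vertex subsets (the induced subgraphs of the recursive construction) are
   represented as Prop-valued predicates V -> Prop. *)
From mathcomp Require Import all_boot.
Set Implicit Arguments. Unset Strict Implicit. Unset Printing Implicit Defensive.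

Section Defs.
Variables (V : finType) (E : rel V).

Definition allv : V -> Prop := fun _ => True.

Definition dpath (S : V -> Prop) (u : V) (p : seq V) (v : V) : Prop :=
  [/\ path E u p, last u p = v, uniq (u :: p) & forall w, w \in u :: p -> S w].

Definition bireach (S : V -> Prop) (r v : V) : Prop :=
  exists p q, [/\ dpath S r p v, dpath S r q v &
                  forall w, w \in p -> w \in q -> w = v].

Definition diblock (S : V -> Prop) (r : V) : V -> Prop :=
  fun v => S v /\ [\/ v = r, E r v | bireach S r v].

Definition last_in (B : V -> Prop) (q : seq V) (x : V) : Prop :=
  exists2 k, k < size q &
    [/\ nth x q k = x, B x & forall j, k < j < size q -> ~ B (nth x q j)].

Definition Xset (S : V -> Prop) (r x : V) : V -> Prop :=
  fun v => [/\ S v, ~ diblock S r v &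
              forall p, dpath S r p v -> last_in (diblock S r) (r :: p) x].

Definition bottleneck (S : V -> Prop) (r x : V) : Prop :=
  [/\ diblock S r x, x <> r & exists v, Xset S r x v].

(* Nodes of the r-rooted cut decomposition of D[S]:
   cd_node S r S' x  means  x is a node of the tree, and the subtree rooted
   at x is the x-rooted cut decomposition of D[S']  (so B_x = diblock S' x). *)
Inductive cd_node (S : V -> Prop) (r : V) : (V -> Prop) -> V -> Prop :=
| cd_root : cd_node S r S r
| cd_step : forall S' x y, cd_node S r S' x -> bottleneck S' x y ->
    cd_node S r (fun v => Xset S' x y v \/ v = y) y.

Definition cd_child (S : V -> Prop) (r x y : V) : Prop :=
  exists S', cd_node S r S' x /\ bottleneck S' x y.

Inductive cd_desc (S : V -> Prop) (r x : V) : V -> Prop :=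
| cd_desc_refl : cd_desc S r x x
| cd_desc_step : forall y z, cd_desc S r x y -> cd_child S r y z -> cd_desc S r x z.

(* B_x is degenerate: x is an internal node and |B_x| = 2 *)
Definition degenerate (S : V -> Prop) (r x : V) : Prop :=
  exists S', [/\ cd_node S r S' x, exists y, bottleneck S' x y &
     exists a b, a <> b /\ forall v, diblock S' x v <-> (v = a \/ v = b)].

Definition degenerate_path (s : V) (hp : seq V) : Prop :=
  [/\ 0 < size hp,
      forall i, i.+1 < size hp -> cd_child allv s (nth s hp i) (nth s hp i.+1) &
      forall i, i < size hp -> degenerate allv s (nth s hp i)].

(* F is an out-branching of D rooted at s: a set of arcs of D forming a
   spanning oriented tree (underlying graph connected with |V|-1 edges)
   whose unique vertex of in-degree zero is s *)
Definition out_branching (s : V) (F : {set V * V}) : Prop :=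
  [/\ forall a, a \in F -> E a.1 a.2,
      forall u v, connect (fun x y => ((x, y) \in F) || ((y, x) \in F)) u v,
      #|F| = #|V| - 1 &
      forall v, (forall u, (u, v) \notin F) <-> v = s].

End Defs.

(* Main.v *)
Require Import Defs.
From mathcomp Require Import all_boot.
From Stdlib Require Import Classical FunctionalExtensionality PropExtensionality.
From mathcomp Require Import zify.
Set Implicit Arguments. Unset Strict Implicit. Unset Printing Implicit Defensive.

Section L.
Variables (V : finType) (E : rel V) (s : V).

Definition Dom (x v : V) := forall p, dpath E (@allv V) s p v -> x \in s :: p.

Lemma SH W : path E s W ->
  exists p, dpath E (@allv V) s p (last s W) /\ {subset s :: p <= s :: W}.
Proof.
move=> pW; case: (shortenP pW) => p' pp' up' sub.
exists p'; split; first by split.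
move=> z; rewrite !inE => /orP [->//|/sub ->]; by rewrite orbT.
Qed.

Lemma PFX S p v u : dpath E S s p v -> u \in s :: p ->
  exists p1 p2, [/\ p = p1 ++ p2, last s p1 = u, dpath E S s p1 u & dpath E S u p2 v].
Proof.
move=> dp ui; case: (splitPl ui) dp => p1 p2 l1 [pp lp up Sp].
exists p1, p2; rewrite cat_path l1 in pp; case/andP: pp => pp1 pp2.
have := up; rewrite -cat_cons cat_uniq => /and3P [u1 hn u2].
have us : u \in s :: p1 by rewrite -l1 mem_last.
split => //; split => //.
- by move=> w wi; apply: Sp; rewrite -cat_cons mem_cat wi.
- by rewrite last_cat l1 in lp.
- rewrite /= u2 andbT; apply/negP => up2.
  by move/hasPn: hn => /(_ u up2) /negP.
- move=> w; rewrite inE => /orP [/eqP ->|wi]; apply: Sp.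
    by rewrite -cat_cons mem_cat us.
  by rewrite -cat_cons mem_cat wi orbT.
Qed.

Lemma Dom_refl v : Dom v v.
Proof. by move=> p [_ <- _ _]; exact: mem_last. Qed.

Lemma DomT a b c : Dom a b -> Dom b c -> Dom a c.
Proof.
move=> hab hbc p dp; case: (PFX dp (hbc p dp)) => p1 [p2 [-> _ d1 _]].
by rewrite -cat_cons mem_cat (hab _ d1).
Qed.

Lemma G1 P x w : dpath E (@allv V) s P x -> w \in s :: P -> Dom x w -> w = x.
Proof.
move=> dP wP hD; case: (PFX dP wP) => p1 [p2 [eP l1 d1 d2]].
have xin := hD _ d1.
case: dP => _ _ uP _; rewrite eP -cat_cons cat_uniq in uP.
case/and3P: uP => _ hn _.
case: d2 => _ l2 _ _.
case: p2 l2 hn {eP} => [|a p2] l2 hn; first by rewrite -l2.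
exfalso; have xa : x \in a :: p2 by rewrite -l2 /= mem_last.
by move/hasPn: hn => /(_ x xa) /negP.
Qed.

Lemma G2 S P0 x q v : dpath E (@allv V) s P0 x -> (forall w, S w -> Dom x w) ->
  dpath E S x q v -> dpath E (@allv V) s (P0 ++ q) v.
Proof.
move=> dP hS [pq lq uq Sq]; have dP' := dP; case: dP => pP lP uP _.
split => //.
- by rewrite cat_path pP lP pq.
- by rewrite last_cat lP.
- rewrite -cat_cons cat_uniq uP; case/andP: uq => xq uq.
  apply/andP; split=> //; apply/andP; split; last exact: uq.
  apply/hasPn => w wq; apply/negP => wP.
  have := G1 dP' wP (hS w (Sq w _)); rewrite inE wq orbT => /(_ isT) ew.
  by rewrite -ew wq in xq.
Qed.

Lemma DR P x w : dpath E (@allv V) s P x -> E x w -> w \notin s :: P ->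
  dpath E (@allv V) s (rcons P w) w.
Proof.
move=> [pP lP uP _] e wn; split => //.
- by rewrite rcons_path pP lP e.
- by rewrite last_rcons.
- by rewrite -rcons_cons rcons_uniq wn uP.
Qed.

Lemma MX (P : nat -> Prop) n : P 0 -> 0 < n ->
  exists k, [/\ k < n, P k & forall j, k < j < n -> ~ P j].
Proof.
move=> P0; elim: n => [//|m IH] _.
case: (classic (P m)) => hm.
  by exists m; split => // j /andP [a b]; lia.
case: m IH hm => [|m] IH hm; first by case: (hm P0).
case: (IH isT) => k [hk Pk hj]; exists k; split => //; first lia.
move=> j /andP [a b]; case: (ltnP j m.+1) => c.
  by apply: hj; rewrite a c.
by have -> : j = m.+1 by lia.
Qed.

Lemma TL d x p k : k <= size p -> path E x p ->
  path E (nth d (x :: p) k) (drop k p) /\ last (nth d (x :: p) k) (drop k p) = last x p.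
Proof.
elim: p x k => [|a p IH] x [|k] hk pp //=.
case/andP: pp => _ pp; exact: IH.
Qed.

Hypothesis reach : forall v, connect E s v.

Lemma EX v : exists p, dpath E (@allv V) s p v.
Proof.
have := reach v => /connectP [W pW ->].
by case: (SH pW) => p [dp _]; exists p.
Qed.

Lemma G3 S' x p v : S' x -> (forall v, S' v <-> Dom x v) ->
  dpath E (@allv V) s p v -> S' v ->
  exists p1 p2, [/\ p = p1 ++ p2, last s p1 = x & dpath E S' x p2 v].
Proof.
move=> hx hc dp Sv.
case: (PFX dp ((hc v).1 Sv p dp)) => p1 [p2 [ep l1 _ [pp2 lp2 up2 _]]].
exists p1, p2; split => //; split => //.
move=> w; rewrite inE => /orP [/eqP ->//|wp2].
apply: NNPP => nSw.
have : ~ Dom x w by move=> hd; apply: nSw; apply/(hc w).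
move=> nD; have [q hq] := not_all_ex_not _ _ nD.
have [dq xq] := imply_to_and _ _ hq.
have wx : w \in x :: p2 by rewrite inE wp2 orbT.
case: (splitPl wx) pp2 lp2 up2 => p21 p22 l21 pp2 lp2 up2.
rewrite cat_path l21 in pp2; case/andP: pp2 => _ pp22.
case: dq => pq lq uq _.
have pW : path E s (q ++ p22) by rewrite cat_path pq lq pp22.
case: (SH pW) => r [dr sub].
have lW : last s (q ++ p22) = v by rewrite last_cat lq -l21 -last_cat.
rewrite lW in dr.
have := (hc v).1 Sv r dr => /sub.
rewrite -cat_cons mem_cat (negbTE (introN idP xq)) /= => xp22.
by move: up2; rewrite /= mem_cat xp22 orbT.
Qed.


Lemma NC S' x : cd_node E (@allv V) s S' x -> S' x /\ (forall v, S' v <-> Dom x v).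
Proof.
elim=> [|{}S' {}x y _ [hx hc] [hB hxy hex]].
  split => // v; split => // _ p _; exact: mem_head.
split; first by right.
move=> v; split.
  case=> [[Sv nB hlast] | ->]; last exact: Dom_refl.
  move=> p dp; case: (G3 hx hc dp Sv) => p1 [p2 [ep l1 d2]].
  case: (hlast _ d2) => k hk [hnth _ _].
  have : y \in x :: p2 by rewrite -hnth mem_nth.
  rewrite ep -cat_cons mem_cat inE => /orP [/eqP ->|->]; last by rewrite orbT.
  by rewrite -l1 mem_last.
move=> hD; case: (classic (v = y)) => [->|nvy]; [by right|left].
have [P0 dP0] := EX x.
have Sy : S' y by case: hB.
have Dxy : Dom x y := (hc y).1 Sy.
have yP0 : y \notin s :: P0.
  by apply/negP => yin; exact: hxy (G1 dP0 yin Dxy).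
have RT : forall z, diblock E S' x z -> z <> y ->
    exists q, dpath E S' x q z /\ y \notin x :: q.
  move=> z [Sz hz] zy; case: (classic (z = x)) => [->|zx].
    exists [::]; split; first by split => // w; rewrite inE => /eqP ->.
    by rewrite inE; apply/eqP => e; apply: hxy.
  case: hz => [//|exz|[p1 [q1 [d1 d2 hdis]]]].
    exists [:: z]; split.
      split => //=; first by rewrite exz.
        by rewrite inE andbT; apply/eqP => e; apply: zx.
      by move=> w; rewrite !inE => /orP [/eqP ->|/eqP ->].
    rewrite !inE negb_or; apply/andP; split; apply/eqP => e.
      by apply: hxy. by apply: zy.
  have yx : y != x by apply/eqP.
  case: (boolP (y \in p1)) => yp1.
    case: (boolP (y \in q1)) => yq1; first by case: zy; rewrite (hdis y yp1 yq1).
    by exists q1; split => //; rewrite inE negb_or yx.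
  by exists p1; split => //; rewrite inE negb_or yx.
have hS : forall w, S' w -> Dom x w by move=> w /hc.
split.
- by apply/hc; apply: (DomT Dxy hD).
- move=> hv; case: (RT v hv nvy) => q [dq yq].
  have := hD _ (G2 dP0 hS dq).
  rewrite -cat_cons mem_cat (negbTE yP0) /=.
  by apply/negP; rewrite inE negb_or in yq; case/andP: yq.
- move=> p dp.
  have B0 : diblock E S' x (nth y (x :: p) 0) by split => //; apply: Or31.
  have [k [hk Bk hmax]] := @MX (fun k => diblock E S' x (nth y (x :: p) k)) _ B0 (ltn0Sn (size p)).
  case: (classic (nth y (x :: p) k = y)) => hz.
    by exists k => //; split => //; rewrite -hz.
  exfalso; case: (RT _ Bk hz) => q [dq yq].
  have dz := G2 dP0 hS dq.
  case: dp => pp lp _ _.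
  have [pt lt] := TL y hk pp.
  case: dz => pz lz _ _.
  have pW : path E s ((P0 ++ q) ++ drop k p) by rewrite cat_path pz lz pt.
  case: (SH pW) => r [dr sub].
  rewrite last_cat lz lt lp in dr.
  move: (sub _ (hD _ dr)); rewrite -cat_cons mem_cat => /orP [|yd].
    rewrite -cat_cons mem_cat (negbTE yP0) /= => yq'.
    by rewrite inE yq' orbT in yq.
  set i := index y (drop k p).
  have hi : i < size (drop k p) by rewrite index_mem.
  have ni : nth y (drop k p) i = y by rewrite nth_index.
  rewrite nth_drop in ni; rewrite size_drop in hi.
  apply: (hmax (k + i).+1); last by rewrite /= ni.
  apply/andP; split; first lia.
  rewrite /=; lia.
Qed.

Lemma US S1 S2 x : cd_node E (@allv V) s S1 x -> cd_node E (@allv V) s S2 x -> S1 = S2.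
Proof.
move=> n1 n2; apply: functional_extensionality => v; apply: propositional_extensionality.
case: (NC n1) => _ h1; case: (NC n2) => _ h2.
by split => H; [apply: (h2 v).2; apply: (h1 v).1 | apply: (h1 v).2; apply: (h2 v).1].
Qed.

Lemma DESC a z : cd_desc E (@allv V) s a z ->
  z = a \/ exists c, cd_child E (@allv V) s a c /\ Dom c z.
Proof.
elim=> [|y0 z0 _ IH [S0 [n0 bt0]]]; first by left.
have Dyz : Dom y0 z0 by apply/(NC n0).2; case: bt0 => [[]].
right; case: IH => [e|[c [hc Dc]]].
  exists z0; split; last exact: Dom_refl.
  by exists S0; rewrite -e.
by exists c; split => //; exact: DomT Dc Dyz.
Qed.

Section F.
Variable F : {set V * V}.
Hypothesis hF : out_branching E s F.

Lemma F0 u : (u, s) \notin F.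
Proof. by case: hF => _ _ _ h; apply: (h s).2. Qed.

Lemma F1 v : v <> s -> exists u, (u, v) \in F.
Proof.
move=> hv; apply: NNPP => hn; apply: hv; case: hF => _ _ _ h; apply/(h v).1.
by move=> u; apply/negP => hu; apply: hn; exists u.
Qed.

Lemma F2 u1 u2 v : (u1, v) \in F -> (u2, v) \in F -> u1 = u2.
Proof.
move=> h1 h2; case: hF => _ _ hcard _.
have hI : [set e.2 | e in F] = [set~ s].
  apply/setP => v0; rewrite in_setC1; apply/imsetP/idP.
    case=> [[a b]] eF -> /=; apply/eqP => es; rewrite es in eF.
    by move: (F0 a); rewrite eF.
  move=> /eqP hv; case: (F1 hv) => u hu; by exists (u, v0).
have : #|[set e.2 | e in F]| == #|F| by rewrite hI cardsC1 hcard subn1.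
move/imset_injP => inj; have := inj _ _ h1 h2 erefl.
by case.
Qed.

Lemma F3 v : connect (fun x y => (x, y) \in F) s v.
Proof.
case: hF => _ hconn _ _.
have := hconn s v => /connectP [p pp ->].
suff H : forall a p, connect (fun x y => (x, y) \in F) s a ->
    path (fun x y => ((x, y) \in F) || ((y, x) \in F)) a p ->
    connect (fun x y => (x, y) \in F) s (last a p).
  by apply: H pp; exact: connect0.
move=> a0 p0; elim: p0 a0 => [//|b p0 IH] a ca /= /andP [hab pp0].
apply: IH pp0.
case/orP: hab => hab.
  by apply: connect_trans ca (connect1 _).
move/connectP: ca => [q pq eq].
case/lastP: q pq eq => [|q c] pq eq.
  by move: (F0 b); rewrite /= in eq; rewrite -eq hab.
rewrite last_rcons in eq; rewrite rcons_path -eq in pq.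
case/andP: pq => pq e.
have := F2 e hab => el.
by apply/connectP; exists q => //; rewrite el.
Qed.

Lemma LF u v : (u, v) \in F -> exists P, dpath E (@allv V) s P u /\ v \notin s :: P.
Proof.
move=> huv; case: hF => hFE _ _ _.
have hv : v <> s by move=> e; move: (F0 u); rewrite -e huv.
have := F3 v => /connectP [p pp ev].
case: (shortenP pp) ev => p' pp' up' _ ev.
case/lastP: p' pp' up' ev => [|P a] pp' up' ev; first by case: hv.
rewrite last_rcons in ev; subst a.
rewrite rcons_path in pp'; case/andP: pp' => pP el.
have := F2 el huv => lP.
rewrite -rcons_cons rcons_uniq in up'; case/andP: up' => vn uP.
exists P; split => //; split => //.
by apply: sub_path pP => x y hxy; exact: (hFE (x, y) hxy).
Qed.

End F.
End L.

Lemma two (V : finType) (a b p q w : V) : a <> b -> p <> q ->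
  (p = a \/ p = b) -> (q = a \/ q = b) -> (w = a \/ w = b) -> w = p \/ w = q.
Proof.
intros; destruct H1; destruct H2; destruct H3; subst;
  try (left; reflexivity); try (right; reflexivity); congruence.
Qed.

Theorem lemma14 (V : finType) (E : rel V) (s : V) (hp : seq V) :
  irreflexive E -> 1 < #|V| -> (forall v, connect E s v) ->
  degenerate_path E s hp ->
  (forall i, i.+1 < size hp ->
     E (nth s hp i) (nth s hp i.+1) /\
     forall F, out_branching E s F -> (nth s hp i, nth s hp i.+1) \in F) /\
  (forall i j, i < j < size hp -> E (nth s hp j) (nth s hp i) ->
     forall F, out_branching E s F -> (nth s hp j, nth s hp i) \notin F) /\
  (forall i, i.+1 < size hp ->
     forall y S', cd_desc E (@allv V) s (nth s hp i) y ->
       cd_node E (@allv V) s S' y ->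
       forall w, diblock E S' y w -> E (nth s hp i) w -> w = nth s hp i.+1).
Proof.
move=> irr hV reach [hsz hch hdeg].
have Dstep : forall k, k.+1 < size hp -> Dom E s (nth s hp k) (nth s hp k.+1).
  move=> k hk; case: (hch k hk) => S1 [n1 [hB _ _]].
  by apply/(NC reach n1).2; case: hB.
have BOT : forall i, i.+1 < size hp -> forall S', cd_node E (@allv V) s S' (nth s hp i) ->
    forall w, diblock E S' (nth s hp i) w -> w = nth s hp i \/ w = nth s hp i.+1.
  move=> i hi S' nS' w hw.
  have hi' : i < size hp by apply: ltnW.
  case: (hdeg i hi') => S0 [n0 _ [a [b [nab hab]]]].
  case: (hch i hi) => S1 [n1 [hB hne _]].
  have e1 := US reach n0 nS'; have e2 := US reach n0 n1; subst S' S1.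
  apply: (two nab _ ((hab _).1 _) ((hab _).1 hB) ((hab _).1 hw)).
  - by move=> e; apply: hne; rewrite e.
  - split; first exact: (NC reach n0).1.
    exact: Or31.
split.
  move=> i hi; case: (hch i hi) => S1 [n1 [hB hne _]].
  have [hx1 hc1] := NC reach n1.
  have Exy : E (nth s hp i) (nth s hp i.+1).
    case: hB => _ [e|//|[p [q [[pp lp up Sp] _ _]]]]; first by case: hne.
    case: p pp lp up Sp => [|h r] pp lp up Sp; first by case: hne; rewrite -lp.
    case/andP: pp => eh _.
    have hd : diblock E S1 (nth s hp i) h.
      split; first by apply: Sp; rewrite !inE eqxx orbT.
      exact: Or32.
    case: (BOT i hi S1 n1 h hd) => eh'.
      by move: eh; rewrite eh' irr.
    by rewrite -eh'.
  split => // F hF.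
  have ns : nth s hp i.+1 <> s.
    move=> e.
    have dp0 : dpath E (@allv V) s [::] (nth s hp i.+1) by split => //=; rewrite e.
    move: (Dstep i hi _ dp0); rewrite inE => /eqP e'; apply: hne; by rewrite e e'.
  case: (F1 hF ns) => u hu.
  case: (LF hF hu) => P [dP nP].
  have Eu : E u (nth s hp i.+1) by case: hF => hFE _ _ _; exact: (hFE _ hu).
  have dR := DR dP Eu nP.
  case: (G3 hx1 hc1 dR ((hc1 _).2 (Dstep i hi))) => p1 [p2 [ep l1 [pp2 lp2 up2 Sp2]]].
  case: p2 ep pp2 lp2 up2 Sp2 => [|h r] ep pp2 lp2 up2 Sp2.
    by move: lp2 => /= e; case: hne; rewrite e.
  case/andP: pp2 => eh _.
  have hd : diblock E S1 (nth s hp i) h.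
    split; first by apply: Sp2; rewrite !inE eqxx orbT.
    exact: Or32.
  case: (BOT i hi S1 n1 h hd) => eh'.
    by move: eh; rewrite eh' irr.
  subst h.
  case: r ep lp2 up2 {Sp2} => [|c r] ep lp2 up2.
    rewrite cats1 in ep; have eP := congr1 fst (rcons_inj ep); rewrite /= in eP.
    have eu : u = nth s hp i.
      case: dP => _ lP _ _. rewrite -lP eP l1. done.
    by rewrite eu in hu.
  exfalso; move: lp2 up2 => /= lp2 /and3P [_ /negP hn _].
  by apply: hn; rewrite -lp2 mem_last.
split.
  move=> i j /andP [hij hj] _ F hF; apply/negP => hin.
  have Dij : Dom E s (nth s hp i) (nth s hp j).
    have : forall d, i + d < size hp -> Dom E s (nth s hp i) (nth s hp (i + d)).
      elim=> [|d IH] hd; first by rewrite addn0; exact: Dom_refl.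
      rewrite addnS in hd *; exact: (DomT (IH (ltnW hd)) (Dstep _ hd)).
    move/(_ (j - i)); rewrite subnKC; last exact: ltnW.
    by apply.
  case: (LF hF hin) => P [dP nP].
  by move: (Dij P dP); rewrite (negbTE nP).
move=> i hi y S' hd nS' w hw Ew.
have Dyw : Dom E s y w := ((NC reach nS').2 w).1 hw.1.
case: (DESC reach hd) => [ey|[c [[S0 [n0 bt0]] Dcy]]].
  subst y; case: (BOT i hi S' nS' w hw) => // ew.
  by move: Ew; rewrite ew irr.
case: bt0 => hB0 hne0 _.
case: (BOT i hi S0 n0 c hB0) => ec; first by case: hne0.
subst c.
have D1w := DomT Dcy Dyw.
have D0w := DomT (Dstep i hi) D1w.
have [P0 dP0] := EX reach (nth s hp i).
have wn : w \notin s :: P0.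
  apply/negP => win; have := G1 dP0 win D0w => ew; by move: Ew; rewrite ew irr.
have dR := DR dP0 Ew wn.
move: (D1w _ dR); rewrite -rcons_cons mem_rcons inE => /orP [/eqP -> //|hin].
have := G1 dP0 hin (Dstep i hi) => e.
case: (hch i hi) => S1 [_ [_ hne _]]; by case: hne.
Qed.
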